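(* Let $\gamma>1$ and $F(x)=x^\gamma$. Let $u:[0,\infty)\to\mathbb R$ be the unique solution of $$u(T)=\mathbb E\Big[1_{\{\sigma_1>T\}}+\min_{a\in[0,1]}\big(a^\gamma+(1-a)^\gamma u(T-\sigma_1)\big)1_{\{\sigma_1\le T\}}\Big],$$ where $\sigma_1$ is exponentially distributed with rate $\lambda>0$ (the first arrival time of a Poisson process of intensity $\lambda$). Then $u$ satisfies $$\partial_T u(T)=\lambda u(T)\Big(\frac{1}{[1+u(T)^{1/(\gamma-1)}]^{\gamma-1}}-1\Big),\qquad u(0)=1,$$ and the optimal action $a(T)=\arg\min_{a\in[0,1]}\{a^\gamma+(1-a)^\gamma u(T)\}$ satisfies $$\partial_T a(T)=\frac{\lambda}{\gamma-1}a(T)(1-a(T))\big((1-a(T))^{\gamma-1}-1\big)<0,\qquad a(0)=1/2,$$ and $T\mapsto a(T)$ is convex.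
   Context: This is the continuous-sale-amount version of an execution problem: orders arrive according to a Poisson process $N$ of intensity $\lambda$ with arrival times $\sigma_1<\sigma_2<\cdots$; a holding of $x\ge0$ units may be sold in arbitrary real amounts at arrival times, with trade cost $F(\text{size})$ and the remainder $\xi_T$ sold at $T$ at cost $F(\xi_T)$; $u(T)$ is the minimal expected cost per unit of $x^\gamma$, i.e. $\hat u(x,T)=x^\gamma u(T)$. *)

(* Defs.v *)
From Stdlib Require Import Reals.
From Coquelicot Require Import Coquelicot.
Open Scope R_scope.

(* Real power x^y for x >= 0, with the convention 0^y = 0 (y > 0).
   (Stdlib's Rpower x y = exp (y ln x) is only meaningful for x > 0.) *)
Definition pw (x y : R) : R := if Rle_dec x 0 then 0 else Rpower x y.

(* Minimum over a in [0,1] of f a (for continuous f on the compact [0,1]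
   the infimum is attained, so this is the min). *)
Definition min01 (f : R -> R) : R :=
  real (Glb_Rbar (fun y => exists a, 0 <= a <= 1 /\ y = f a)).

Definition cost (gamma a v : R) : R := pw a gamma + pw (1 - a) gamma * v.

(* E[ 1_{sigma1 > T} + min_a (...) u(T - sigma1) 1_{sigma1 <= T} ],
   sigma1 ~ Exp(lambda), written via the density lambda e^{-lambda s}. *)
Definition dpp_rhs (lambda gamma : R) (u : R -> R) (T : R) : R :=
  exp (- lambda * T)
  + RInt (fun s => lambda * exp (- lambda * s)
                   * min01 (fun a => cost gamma a (u (T - s)))) 0 T.

(* Main.v *)
Require Import Defs.
From Stdlib Require Import Reals.
From Coquelicot Require Import Coquelicot.
Open Scope R_scope.
From Stdlib Require Import Lra.

Lemma pw_pos x y : 0 < x -> pw x y = Rpower x y.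
Proof. intros; unfold pw; destruct (Rle_dec x 0); lra. Qed.

Lemma pw_0 y : pw 0 y = 0.
Proof. unfold pw; destruct (Rle_dec 0 0); lra. Qed.

Lemma Rpower_gt0 x y : 0 < Rpower x y.
Proof. unfold Rpower; apply exp_pos. Qed.

Lemma Rpower_succ x e : 0 < x -> Rpower x e = Rpower x (e - 1) * x.
Proof.
  intros Hx. replace e with ((e-1)+1) at 1 by ring.
  rewrite Rpower_plus, Rpower_1; auto.
Qed.

Lemma Rpower_inv x e : 0 < x -> Rpower (/ x) e = / Rpower x e.
Proof. intros Hx; unfold Rpower; rewrite ln_Rinv by auto.
  replace (e * - ln x) with (- (e * ln x)) by ring. apply exp_Ropp. Qed.

Lemma Rpower_one e : Rpower 1 e = 1.
Proof. unfold Rpower; rewrite ln_1, Rmult_0_r; apply exp_0. Qed.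

Lemma tangent_strict g z y0 : 1 < g -> 0 <= z -> 0 < y0 -> z <> y0 ->
  Rpower y0 g + g * Rpower y0 (g - 1) * (z - y0) < pw z g.
Proof.
  intros Hg Hz Hy Hne.
  assert (Hs := Rpower_succ y0 g Hy).
  assert (Hp := Rpower_gt0 y0 (g-1)).
  destruct (Req_dec z 0) as [->|Hz0].
  { rewrite pw_0, Hs. assert (0 < Rpower y0 (g-1) * y0) by (apply Rmult_lt_0_compat; auto). nra. }
  assert (Hzp : 0 < z) by lra. rewrite pw_pos by auto.
  assert (Hd : forall c, 0 < c -> derivable_pt_lim (fun x => Rpower x g) c (g * Rpower c (g - 1)))
    by (intros; apply derivable_pt_lim_power; auto).
  destruct (Rlt_or_le z y0) as [Hlt|Hle].
  - destruct (MVT_cor2 (fun x => Rpower x g) (fun x => g * Rpower x (g - 1)) z y0 Hlt)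
      as [c [Hc1 Hc2]].
    { intros c Hc; apply Hd; lra. }
    assert (Rpower c (g-1) < Rpower y0 (g-1)) by (apply Rlt_Rpower_l; lra).
    assert (0 < g * ((Rpower y0 (g-1) - Rpower c (g-1)) * (y0 - z))) by
      (apply Rmult_lt_0_compat; [lra|apply Rmult_lt_0_compat; lra]).
    simpl in Hc1. nra.
  - assert (Hlt : y0 < z) by lra.
    destruct (MVT_cor2 (fun x => Rpower x g) (fun x => g * Rpower x (g - 1)) y0 z Hlt)
      as [c [Hc1 Hc2]].
    { intros c Hc; apply Hd; lra. }
    assert (Rpower y0 (g-1) < Rpower c (g-1)) by (apply Rlt_Rpower_l; lra).
    assert (0 < g * ((Rpower c (g-1) - Rpower y0 (g-1)) * (z - y0))) by
      (apply Rmult_lt_0_compat; [lra|apply Rmult_lt_0_compat; lra]).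
    simpl in Hc1. nra.
Qed.

Lemma tangent g z y0 : 1 < g -> 0 <= z -> 0 < y0 ->
  Rpower y0 g + g * Rpower y0 (g - 1) * (z - y0) <= pw z g.
Proof.
  intros Hg Hz Hy. destruct (Req_dec z y0) as [->|Hne].
  - rewrite pw_pos by auto; lra.
  - left; apply tangent_strict; auto.
Qed.

Definition wf g y := Rpower y (1 / (g - 1)).
Definition Pf g y := wf g y / (1 + wf g y).
Definition Phi g y := y / Rpower (1 + wf g y) (g - 1).

Lemma wf_pow g y : 1 < g -> 0 < y -> Rpower (wf g y) (g - 1) = y.
Proof. intros; unfold wf; rewrite Rpower_mult.
  replace (1 / (g - 1) * (g - 1)) with 1 by (field; lra). apply Rpower_1; auto. Qed.

Lemma min_facts g y : 1 < g -> 0 < y ->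
  cost g (Pf g y) y = Phi g y /\
  (forall b, 0 <= b <= 1 -> cost g (Pf g y) y <= cost g b y) /\
  (forall b, 0 <= b <= 1 -> b <> Pf g y -> cost g (Pf g y) y < cost g b y).
Proof.
  intros Hg Hy.
  set (w := wf g y).
  assert (Hw : 0 < w) by apply Rpower_gt0.
  assert (Hwp := wf_pow g y Hg Hy). fold w in Hwp.
  set (p := Pf g y). set (q := / (1 + w)).
  assert (Hq : 0 < q) by (apply Rinv_0_lt_compat; lra).
  assert (Hpq : p = w * q) by (unfold p, Pf, q; fold w; field; lra).
  assert (Hp : 0 < p) by (rewrite Hpq; nra).
  assert (H1p : 1 - p = q) by (unfold p, Pf, q; fold w; field; lra).
  assert (HRq : Rpower q (g - 1) = / Rpower (1 + w) (g - 1)) by (apply Rpower_inv; lra).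
  assert (HRp : Rpower p (g - 1) = y * Rpower q (g - 1)).
  { rewrite Hpq, <- Rpower_mult_distr by auto. rewrite Hwp; auto. }
  assert (Hc : cost g p y = Phi g y).
  { unfold cost, Phi. fold w. rewrite H1p, !pw_pos by auto.
    rewrite (Rpower_succ p g), (Rpower_succ q g) by auto.
    rewrite HRp. unfold Rdiv. rewrite <- HRq.
    assert (Hpq1: p + q = 1) by lra.
    transitivity (y * Rpower q (g-1) * (p+q)); [ring | rewrite Hpq1; ring]. }
  assert (Hgen : forall b, 0 <= b <= 1 ->
     cost g b y - cost g p y >= g * Rpower p (g-1) * (b - p) - g * y * Rpower q (g-1) * (b - p)
     /\ (b <> p -> cost g b y - cost g p y > g * Rpower p (g-1) * (b - p) - g * y * Rpower q (g-1) * (b - p))).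
  { intros b Hb.
    assert (T1 := tangent g b p Hg ltac:(lra) Hp).
    assert (T2 := tangent g (1 - b) q Hg ltac:(lra) Hq).
    assert (T2' : y * (Rpower q g + g * Rpower q (g - 1) * (1 - b - q)) <= y * pw (1 - b) g)
      by (apply Rmult_le_compat_l; lra).
    unfold cost. rewrite H1p, (pw_pos p), (pw_pos q) by auto.
    split.
    - nra.
    - intros Hne. assert (T3 := tangent_strict g b p Hg ltac:(lra) Hp Hne). nra. }
  rewrite HRp in Hgen.
  split; [exact Hc|split].
  - intros b Hb. destruct (Hgen b Hb) as [H _]. lra.
  - intros b Hb Hne. destruct (Hgen b Hb) as [_ H]. specialize (H Hne). lra.
Qed.

Lemma min01_val g y : 1 < g -> 0 < y ->
  min01 (fun b => cost g b y) = Phi g y.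
Proof.
  intros Hg Hy. destruct (min_facts g y Hg Hy) as [Hc [Hle _]].
  unfold min01.
  rewrite (is_glb_Rbar_unique _ (Finite (Phi g y))). reflexivity.
  split.
  - intros z [b [Hb ->]]. simpl. rewrite <- Hc. apply Hle; auto.
  - intros l Hl. apply Hl. exists (Pf g y). split; [|auto].
    unfold Pf. assert (0 < wf g y) by apply Rpower_gt0.
    split; [apply Rlt_le, Rdiv_lt_0_compat; lra|].
    apply Rmult_le_reg_r with (1 + wf g y); [lra|].
    unfold Rdiv; rewrite Rmult_assoc, Rinv_l by lra. lra.
Qed.


Lemma RInt_cont (f : R -> R) : (forall a b, ex_RInt f a b) ->
  forall x, continuous (RInt f 0) x.
Proof.
  intros Hf x.
  destruct (ex_RInt_ub f (x - 1) (x + 1) (Hf _ _)) as [M HM].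
  apply filterlim_locally. intros eps.
  assert (HM0 : 0 < Rabs M + 1) by (generalize (Rabs_pos M); lra).
  assert (Hd : 0 < Rmin 1 (eps / (Rabs M + 1))).
  { apply Rmin_glb_lt; [lra|]. apply Rdiv_lt_0_compat; [apply cond_pos|lra]. }
  exists (mkposreal _ Hd). intros y Hy.
  change (Rabs (y - x) < Rmin 1 (eps / (Rabs M + 1))) in Hy.
  change (Rabs (RInt f 0 y - RInt f 0 x) < eps).
  assert (HC0 := RInt_Chasles f 0 x y (Hf _ _) (Hf _ _)).
  assert (HC : RInt f 0 x + RInt f x y = RInt f 0 y) by exact HC0.
  assert (Hab : forall a b c : R, a + b = c -> c - a = b) by (intros; lra).
  rewrite (Hab _ _ _ HC).
  assert (Hb : Rabs (RInt f x y) <= Rabs (y - x) * M).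
  { apply (norm_RInt_le_const_abs f x y (RInt f x y) M).
    - intros t Ht. apply HM.
      assert (Rabs (y - x) < 1) by (eapply Rlt_le_trans; [apply Hy| apply Rmin_l]).
      apply Rabs_def2 in H.
      unfold Rmin, Rmax in *; destruct (Rle_dec x y), (Rle_dec (x-1) (x+1)); lra.
    - exact (RInt_correct f x y (Hf x y)). }
  assert (H1 : Rabs (y - x) < eps / (Rabs M + 1)) by (eapply Rlt_le_trans; [apply Hy| apply Rmin_r]).
  assert (H2 : Rabs (y - x) * M <= Rabs (y - x) * (Rabs M + 1)).
  { apply Rmult_le_compat_l; [apply Rabs_pos|]. generalize (Rle_abs M); lra. }
  assert (H3 : Rabs (y - x) * (Rabs M + 1) < eps).
  { apply Rmult_lt_reg_r with (/ (Rabs M + 1)). apply Rinv_0_lt_compat; lra.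
    rewrite Rmult_assoc, Rinv_r by lra. rewrite Rmult_1_r. exact H1. }
  lra.
Qed.

Lemma rderiv (f g : R -> R) l : is_derive f 0 l -> (forall x, 0 <= x -> g x = f x) ->
  filterlim (fun h => (g h - g 0) / h) (at_right 0) (locally l).
Proof.
  intros Hd Hg. apply is_derive_Reals in Hd.
  apply filterlim_locally. intros eps.
  destruct (Hd eps (cond_pos eps)) as [delta Hdel].
  exists delta. intros y Hy Hy0.
  change (Rabs (y - 0) < delta) in Hy.
  change (Rabs ((g y - g 0) / y - l) < eps).
  rewrite !Hg by lra.
  assert (E : f y = f (0 + y)) by (rewrite Rplus_0_l; auto). rewrite E.
  apply Hdel; [lra|]. replace y with (y - 0) by ring. exact Hy.
Qed.

Lemma cont_max0 x : continuous (fun r => Rmax r 0) x.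
Proof.
  apply continuous_ext with (fun r => (r + Rabs r) / 2).
  { intros r. unfold Rmax, Rabs. destruct (Rle_dec r 0), (Rcase_abs r); lra. }
  apply (continuous_mult (K:=R_AbsRing) (fun r => r + Rabs r) (fun _ => / 2) x);
    [|apply continuous_const].
  apply (continuous_plus (K:=R_AbsRing) (fun r => r) Rabs x); [apply continuous_id| apply continuous_Rabs].
Qed.


Lemma Phi_cont g y : 1 < g -> 0 < y -> continuous (Phi g) y.
Proof.
  intros Hg Hy. apply (ex_derive_continuous (K:=R_AbsRing) (V:=R_NormedModule)).
  unfold Phi, wf, Rpower. auto_derive.
  assert (H := exp_pos (1 / (g - 1) * ln y)).
  assert (H2 := exp_pos ((g - 1) * ln (1 + exp (1 / (g - 1) * ln y)))).
  repeat split; lra.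
Qed.

Lemma Pf_derive g y : 1 < g -> 0 < y ->
  is_derive (Pf g) y (1 / (g - 1) / y * wf g y / (1 + wf g y) ^ 2).
Proof.
  intros Hg Hy. unfold Pf, wf, Rpower. auto_derive.
  - assert (H := exp_pos (1 / (g - 1) * ln y)). repeat split; lra.
  - assert (H := exp_pos (1 / (g - 1) * ln y)). field. lra.
Qed.

Definition gfun lam g x := lam / (g - 1) * x * (1 - x) * (pw (1 - x) (g - 1) - 1).

Lemma Rpower_lt1 x e : 0 < x < 1 -> 0 < e -> Rpower x e < 1.
Proof.
  intros Hx He. unfold Rpower. rewrite <- exp_0. apply exp_increasing.
  assert (ln x < 0) by (rewrite <- ln_1; apply ln_increasing; lra). nra.
Qed.

Lemma gfun_neg lam g x : 0 < lam -> 1 < g -> 0 < x < 1 -> gfun lam g x < 0.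
Proof.
  intros Hl Hg Hx. unfold gfun. rewrite pw_pos by lra.
  assert (Rpower (1 - x) (g - 1) < 1) by (apply Rpower_lt1; lra).
  assert (0 < lam / (g - 1)) by (apply Rdiv_lt_0_compat; lra).
  assert (0 < lam / (g - 1) * x * (1 - x)) by
    (apply Rmult_lt_0_compat; [apply Rmult_lt_0_compat|]; lra).
  nra.
Qed.

Lemma gfun_mono lam g x1 x2 : 0 < lam -> 1 < g -> 0 < x2 -> x2 <= x1 -> x1 <= 1/2 ->
  gfun lam g x1 <= gfun lam g x2.
Proof.
  intros Hl Hg Hx2 H21 Hx1.
  destruct (Req_dec x1 x2) as [->|Hne]; [lra|].
  set (ge := fun x => lam / (g - 1) * x * (1 - x) * (exp ((g - 1) * ln (1 - x)) - 1)).
  set (dg := fun x => lam / (g - 1) * ((1 - 2 * x) * (exp ((g - 1) * ln (1 - x)) - 1)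
                        - (g - 1) * x * exp ((g - 1) * ln (1 - x)))).
  assert (Hge : forall x, 0 < x < 1 -> gfun lam g x = ge x).
  { intros x Hx. unfold gfun, ge. rewrite pw_pos by lra. reflexivity. }
  destruct (MVT_cor2 ge dg x2 x1 ltac:(lra)) as [c [Hc1 Hc2]].
  { intros c Hc. apply is_derive_Reals. unfold ge, dg. auto_derive.
    - repeat split; lra.
    - replace (1 + - c) with (1 - c) by ring. field. lra. }
  rewrite !Hge by lra.
  assert (HB : exp ((g - 1) * ln (1 - c)) < 1).
  { change (Rpower (1 - c) (g - 1) < 1). apply Rpower_lt1; lra. }
  assert (HB0 := exp_pos ((g - 1) * ln (1 - c))).
  assert (0 < lam / (g - 1)) by (apply Rdiv_lt_0_compat; lra).
  assert (Hd : dg c <= 0).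
  { unfold dg.
    assert (0 <= (1 - 2 * c) * (1 - exp ((g - 1) * ln (1 - c)))) by
      (apply Rmult_le_pos; lra).
    assert (0 <= (g - 1) * c * exp ((g - 1) * ln (1 - c))) by
      (apply Rmult_le_pos; [apply Rmult_le_pos|]; lra).
    assert (0 <= lam / (g - 1) * ((1 - 2 * c) * (1 - exp ((g - 1) * ln (1 - c)))
               + (g - 1) * c * exp ((g - 1) * ln (1 - c)))) by (apply Rmult_le_pos; lra).
    nra. }
  assert (0 <= - dg c * (x1 - x2)) by (apply Rmult_le_pos; lra).
  lra.
Qed.

Lemma mvt_pos (f df : R -> R) x y : 0 <= x -> x < y ->
  (forall t, 0 <= t -> is_derive f t (df t)) ->
  exists c, f y - f x = df c * (y - x) /\ x < c < y.
Proof.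
  intros Hx Hxy Hd. apply MVT_cor2; auto.
  intros c Hc. apply is_derive_Reals, Hd; lra.
Qed.

Lemma decr_of (f df : R -> R) : (forall t, 0 <= t -> is_derive f t (df t)) ->
  (forall t, 0 <= t -> df t < 0) -> forall x y, 0 <= x -> x <= y -> f y <= f x.
Proof.
  intros Hd Hn x y Hx Hxy. destruct (Req_dec x y) as [->|Hne]; [lra|].
  destruct (mvt_pos f df x y Hx ltac:(lra) Hd) as [c [Hc1 Hc2]].
  assert (df c < 0) by (apply Hn; lra).
  assert (0 <= - df c * (y - x)) by (apply Rmult_le_pos; lra). lra.
Qed.

Lemma convex_aux (f df : R -> R) : (forall t, 0 <= t -> is_derive f t (df t)) ->
  (forall x y, 0 <= x -> x <= y -> df x <= df y) ->
  forall x y t, 0 <= x -> x < y -> 0 < t < 1 ->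
  f (t * x + (1 - t) * y) <= t * f x + (1 - t) * f y.
Proof.
  intros Hd Hm x y t Hx Hxy Ht.
  set (z := t * x + (1 - t) * y).
  assert (Hz1 : x < z) by (unfold z; nra).
  assert (Hz2 : z < y) by (unfold z; nra).
  destruct (mvt_pos f df x z Hx Hz1 Hd) as [c1 [E1 C1]].
  destruct (mvt_pos f df z y ltac:(lra) Hz2 Hd) as [c2 [E2 C2]].
  assert (Hc : df c1 <= df c2) by (apply Hm; lra).
  assert (Ez : z - x = (1 - t) * (y - x)) by (unfold z; ring).
  assert (Ey : y - z = t * (y - x)) by (unfold z; ring).
  assert (0 <= t * (1 - t) * (y - x) * (df c2 - df c1)) by
    (apply Rmult_le_pos; [apply Rmult_le_pos; [apply Rmult_le_pos|]|]; lra).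
  rewrite Ez in E1. rewrite Ey in E2. nra.
Qed.

Lemma convex_of (f df : R -> R) : (forall t, 0 <= t -> is_derive f t (df t)) ->
  (forall x y, 0 <= x -> x <= y -> df x <= df y) ->
  forall x y t, 0 <= x -> 0 <= y -> 0 <= t <= 1 ->
  f (t * x + (1 - t) * y) <= t * f x + (1 - t) * f y.
Proof.
  intros Hd Hm x y t Hx Hy Ht.
  destruct (Req_dec t 0) as [->|H0].
  { replace (0 * x + (1 - 0) * y) with y by ring. lra. }
  destruct (Req_dec t 1) as [->|H1].
  { replace (1 * x + (1 - 1) * y) with x by ring. lra. }
  destruct (Rtotal_order x y) as [Hlt|[->|Hgt]].
  - apply convex_aux with df; auto; lra.
  - replace (t * y + (1 - t) * y) with y by ring. lra.
  - assert (H := convex_aux f df Hd Hm y x (1 - t) Hy Hgt ltac:(lra)).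
    replace (t * x + (1 - t) * y) with ((1 - t) * y + (1 - (1 - t)) * x) by ring. lra.
Qed.


Lemma step1 (lambda gamma : R) (u : R -> R) T : 0 <= T ->
  ex_RInt (fun s => lambda * exp (- lambda * s)
                       * min01 (fun b => cost gamma b (u (T - s)))) 0 T ->
  u T = dpp_rhs lambda gamma u T ->
  let h0 := fun r => lambda * exp (lambda * r) * min01 (fun b => cost gamma b (u r)) in
  ex_RInt h0 0 T /\ u T = exp (- lambda * T) * (1 + RInt h0 0 T).
Proof.
  intros HT Hex Hd h0.
  set (fT := fun s => lambda * exp (- lambda * s)
                       * min01 (fun b => cost gamma b (u (T - s)))) in *.
  assert (H0 : is_RInt fT T 0 (- RInt fT 0 T)) by
    exact (is_RInt_swap fT T 0 _ (RInt_correct fT 0 T Hex)).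
  assert (H1 : is_RInt fT (-1 * 0 + T) (-1 * T + T) (- RInt fT 0 T)).
  { replace (-1 * 0 + T) with T by ring. replace (-1 * T + T) with 0 by ring. exact H0. }
  assert (H1' := is_RInt_comp_lin fT (-1) T 0 T _ H1).
  assert (H1'' := is_RInt_scal _ 0 T (- exp (lambda * T)) _ H1').
  assert (H2 : is_RInt h0 0 T ((- exp (lambda * T)) * (- RInt fT 0 T))).
  { refine (is_RInt_ext _ _ _ _ _ _ H1''). intros x _.
    unfold h0, fT, scal; simpl; unfold mult; simpl.
    replace (T - (-1 * x + T)) with x by ring.
    replace (- lambda * (-1 * x + T)) with (lambda * x + - (lambda * T)) by ring.
    rewrite exp_plus, exp_Ropp.
    assert (exp (lambda * T) <> 0) by (apply Rgt_not_eq, exp_pos). field; auto. }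
  split; [eexists; exact H2|].
  rewrite (is_RInt_unique _ _ _ _ H2), Hd.
  unfold dpp_rhs. fold fT.
  replace (- lambda * T) with (- (lambda * T)) by ring. rewrite exp_Ropp.
  assert (exp (lambda * T) <> 0) by (apply Rgt_not_eq, exp_pos). field; auto.
Qed.


Lemma Phi_pos g y : 0 < y -> 0 < Phi g y.
Proof. intros; unfold Phi. apply Rdiv_lt_0_compat; auto; apply Rpower_gt0. Qed.

Lemma Pf_range g y : 0 < Pf g y < 1.
Proof. unfold Pf. assert (0 < wf g y) by apply Rpower_gt0.
  split; [apply Rdiv_lt_0_compat; lra|].
  apply Rmult_lt_reg_r with (1 + wf g y); [lra|].
  unfold Rdiv; rewrite Rmult_assoc, Rinv_l by lra. lra. Qed.

Lemma alg_a lam g y : 1 < g -> 0 < y ->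
  scal (lam * (Phi g y - y)) (1 / (g - 1) / y * wf g y / (1 + wf g y) ^ 2)
  = gfun lam g (Pf g y).
Proof.
  intros Hg Hy. unfold scal; simpl; unfold mult; simpl.
  unfold gfun, Phi, Pf. set (w := wf g y).
  assert (Hw : 0 < w) by apply Rpower_gt0.
  replace (1 - w / (1 + w)) with (/ (1 + w)) by (field; lra).
  rewrite pw_pos by (apply Rinv_0_lt_compat; lra).
  rewrite Rpower_inv by lra.
  assert (0 < Rpower (1 + w) (g - 1)) by apply Rpower_gt0.
  field. repeat split; lra.
Qed.

Lemma alg_u lam g y : 1 < g -> 0 < y ->
  lam * (Phi g y - y) = lam * y * (1 / pw (1 + pw y (1 / (g - 1))) (g - 1) - 1).
Proof.
  intros Hg Hy. unfold Phi. rewrite (pw_pos y) by auto. fold (wf g y).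
  assert (0 < wf g y) by apply Rpower_gt0.
  rewrite pw_pos by lra.
  assert (0 < Rpower (1 + wf g y) (g - 1)) by apply Rpower_gt0.
  field. lra.
Qed.


Theorem corollary3p8 (lambda gamma : R) (u a : R -> R) :
  0 < lambda -> 1 < gamma ->
  (forall T, 0 <= T ->
     ex_RInt (fun s => lambda * exp (- lambda * s)
                       * min01 (fun b => cost gamma b (u (T - s)))) 0 T) ->
  (forall T, 0 <= T -> u T = dpp_rhs lambda gamma u T) ->
  (forall T, 0 <= T -> 0 <= a T <= 1 /\
     forall b, 0 <= b <= 1 -> cost gamma (a T) (u T) <= cost gamma b (u T)) ->
  u 0 = 1 /\
  (forall T, 0 < T ->
     is_derive u T (lambda * u T
        * (1 / pw (1 + pw (u T) (1 / (gamma - 1))) (gamma - 1) - 1))) /\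
  filterlim (fun h => (u h - u 0) / h) (at_right 0)
     (locally (lambda * u 0
        * (1 / pw (1 + pw (u 0) (1 / (gamma - 1))) (gamma - 1) - 1))) /\
  a 0 = 1 / 2 /\
  (forall T, 0 < T ->
     is_derive a T (lambda / (gamma - 1) * a T * (1 - a T)
                      * (pw (1 - a T) (gamma - 1) - 1))) /\
  filterlim (fun h => (a h - a 0) / h) (at_right 0)
     (locally (lambda / (gamma - 1) * a 0 * (1 - a 0)
                 * (pw (1 - a 0) (gamma - 1) - 1))) /\
  (forall T, 0 <= T ->
     lambda / (gamma - 1) * a T * (1 - a T) * (pw (1 - a T) (gamma - 1) - 1) < 0) /\
  (forall x y t, 0 <= x -> 0 <= y -> 0 <= t <= 1 ->
     a (t * x + (1 - t) * y) <= t * a x + (1 - t) * a y).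
Proof.
  intros Hl Hg Hint Hdpp Ha.
  set (h0 := fun r => lambda * exp (lambda * r) * min01 (fun b => cost gamma b (u r))).
  assert (S1 : forall T, 0 <= T -> ex_RInt h0 0 T /\ u T = exp (- lambda * T) * (1 + RInt h0 0 T)).
  { intros T HT. exact (step1 lambda gamma u T HT (Hint T HT) (Hdpp T HT)). }
  set (H := fun r => h0 (Rmax r 0)).
  assert (Hex0 : forall T, ex_RInt H 0 T).
  { intros T. destruct (Rle_lt_dec 0 T) as [HT|HT].
    - apply (ex_RInt_ext h0); [|apply S1; auto].
      intros x Hx. unfold H. rewrite Rmax_left; auto.
      unfold Rmin in Hx; destruct (Rle_dec 0 T); lra.
    - apply (ex_RInt_ext (fun _ => h0 0)); [|apply ex_RInt_const].
      intros x Hx. unfold H. rewrite Rmax_right; auto.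
      unfold Rmax in Hx; destruct (Rle_dec 0 T); lra. }
  assert (Hex : forall x y, ex_RInt H x y).
  { intros x y. apply ex_RInt_Chasles with 0; [apply ex_RInt_swap|]; apply Hex0. }
  set (K := RInt H 0).
  set (v := fun T => exp (- lambda * T) * (1 + K T)).
  assert (Huv : forall T, 0 <= T -> u T = v T).
  { intros T HT. rewrite (proj2 (S1 T HT)). unfold v, K. f_equal. f_equal.
    apply RInt_ext. intros x Hx. unfold H. rewrite Rmax_left; auto.
    unfold Rmin in Hx; destruct (Rle_dec 0 T); lra. }
  assert (Kc : forall x, continuous K x) by (apply RInt_cont; auto).
  assert (vc : forall x, continuous v x).
  { intros x. apply (continuous_mult (K:=R_AbsRing) (fun T => exp (- lambda * T)) (fun T => 1 + K T) x).
    - apply (ex_derive_continuous (K:=R_AbsRing) (V:=R_NormedModule)). auto_derive; auto.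
    - apply (continuous_plus (K:=R_AbsRing) (fun _ => 1) K x); [apply continuous_const|apply Kc]. }
  assert (v0 : v 0 = 1).
  { unfold v, K. rewrite RInt_point. replace (- lambda * 0) with 0 by ring. rewrite exp_0.
    change (1 * (1 + 0) = 1). ring. }
  assert (HH : forall r, 0 <= r -> 0 < v r -> H r = lambda * exp (lambda * r) * Phi gamma (v r)).
  { intros r Hr Hv. unfold H, h0. rewrite Rmax_left by auto. rewrite Huv by auto.
    rewrite min01_val; auto. }
  assert (vpos : forall T0, 0 <= T0 -> 0 < v T0).
  { intros T0 HT0. destruct (Rlt_or_le 0 (v T0)) as [Hp|Hn]; [exact Hp|exfalso].
    set (E := fun t => 0 <= t <= T0 /\ forall r, 0 <= r <= t -> 0 < v r).
    assert (E0 : E 0).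
    { split; [lra|]. intros r Hr. replace r with 0 by lra. rewrite v0; lra. }
    assert (Eb : bound E) by (exists T0; intros t [Ht _]; lra).
    destruct (completeness E Eb (ex_intro _ 0 E0)) as [m [Hub Hlub]].
    assert (Hm0 : 0 <= m) by (apply Hub; auto).
    assert (HmT : m <= T0) by (apply Hlub; intros t [Ht _]; lra).
    assert (A1 : forall r, 0 <= r < m -> 0 < v r).
    { intros r Hr. destruct (Rlt_or_le 0 (v r)) as [Hp|Hn']; [exact Hp|exfalso].
      assert (m <= r); [|lra].
      apply Hlub. intros t [Ht Htr]. destruct (Rle_or_lt t r) as [|Hlt]; auto.
      assert (0 < v r) by (apply Htr; lra). lra. }
    assert (A2 : 0 < v m).
    { unfold v. apply Rmult_lt_0_compat; [apply exp_pos|].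
      assert (0 <= K m); [|lra].
      unfold K. apply RInt_ge_0; auto. intros x Hx.
      rewrite HH by (try lra; apply A1; lra).
      assert (0 < v x) by (apply A1; lra).
      apply Rlt_le, Rmult_lt_0_compat; [apply Rmult_lt_0_compat; [lra|apply exp_pos]|].
      apply Phi_pos; auto. }
    destruct (Req_dec m T0) as [<-|Hne]; [lra|].
    assert (Hc : filterlim v (locally m) (locally (v m))) by apply vc.
    pose proof (proj1 (@filterlim_locally R_UniformSpace R_UniformSpace (locally m) _ v (v m)) Hc) as Hc2. clear Hc. rename Hc2 into Hc.
    destruct (Hc (mkposreal _ A2)) as [d Hd].
    set (t' := Rmin (m + d / 2) T0).
    assert (Ht' : E t').
    { assert (0 < d) by apply cond_pos.
      split; [unfold t', Rmin; destruct (Rle_dec (m + d/2) T0); lra|].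
      intros r Hr. destruct (Rlt_or_le r m) as [Hrm|Hrm]; [apply A1; lra|].
      assert (Hb : ball m d r).
      { change (Rabs (r - m) < d). rewrite Rabs_right by lra.
        unfold t', Rmin in Hr; destruct (Rle_dec (m + d/2) T0); lra. }
      specialize (Hd r Hb). change (Rabs (v r - v m) < v m) in Hd.
      apply Rabs_def2 in Hd. lra. }
    assert (t' <= m) by (apply Hub; auto).
    assert (0 < d) by apply cond_pos.
    unfold t', Rmin in H0; destruct (Rle_dec (m + d/2) T0); lra. }
  assert (HHall : forall r, H r = lambda * exp (lambda * Rmax r 0) * Phi gamma (v (Rmax r 0))).
  { intros r. replace (H r) with (H (Rmax r 0)).
    - rewrite HH; [reflexivity| apply Rmax_r | apply vpos, Rmax_r].
    - unfold H. rewrite (Rmax_left (Rmax r 0) 0) by apply Rmax_r. reflexivity. }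
  assert (Hcont : forall r, continuous H r).
  { intros r. apply (continuous_ext (fun r => lambda * exp (lambda * Rmax r 0) * Phi gamma (v (Rmax r 0)))).
    { intros; symmetry; apply HHall. }
    apply (continuous_mult (K:=R_AbsRing) (fun r => lambda * exp (lambda * Rmax r 0)) (fun r => Phi gamma (v (Rmax r 0))) r).
    - apply (continuous_comp (fun r => Rmax r 0) (fun x => lambda * exp (lambda * x))).
      + apply cont_max0.
      + apply (ex_derive_continuous (K:=R_AbsRing) (V:=R_NormedModule)). auto_derive; auto.
    - apply (continuous_comp (fun r => v (Rmax r 0)) (Phi gamma)).
      + apply (continuous_comp (fun r => Rmax r 0) v); [apply cont_max0|apply vc].
      + apply Phi_cont; auto. apply vpos, Rmax_r. }
  assert (HdK : forall T, is_derive K T (H T)).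
  { intros T. apply is_derive_RInt with 0; [|apply Hcont].
    apply filter_forall. intros b. apply (RInt_correct H 0 b (Hex 0 b)). }
  assert (Hdv : forall T, 0 <= T -> is_derive v T (lambda * (Phi gamma (v T) - v T))).
  { intros T HT. unfold v. auto_derive.
    - exists (H T). apply HdK.
    - replace (Derive (fun x => K x) T) with (H T) by (symmetry; apply is_derive_unique, HdK).
      fold (v T). rewrite HH by (auto; apply vpos; auto).
      replace (lambda * T) with (- (- lambda * T)) by ring. rewrite exp_Ropp.
      assert (exp (- lambda * T) <> 0) by (apply Rgt_not_eq, exp_pos).
      unfold v. generalize (K T) (Phi gamma (exp (- lambda * T) * (1 + K T))). intros k P.
      field; auto. }
  assert (u0 : u 0 = 1) by (rewrite Huv by lra; exact v0).
  set (f := fun T => Pf gamma (v T)).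
  assert (Haf : forall T, 0 <= T -> a T = f T).
  { intros T HT. destruct (Ha T HT) as [Hab Hmin].
    assert (Hy : 0 < u T) by (rewrite Huv by auto; apply vpos; auto).
    destruct (min_facts gamma (u T) Hg Hy) as [_ [_ Hs]].
    unfold f. rewrite <- Huv by auto.
    destruct (Req_dec (a T) (Pf gamma (u T))) as [E|Hne]; auto.
    exfalso. specialize (Hs (a T) Hab Hne).
    assert (Hr := Pf_range gamma (u T)).
    specialize (Hmin (Pf gamma (u T)) ltac:(lra)). lra. }
  assert (Hdf : forall T, 0 <= T -> is_derive f T (gfun lambda gamma (f T))).
  { intros T HT. unfold f. rewrite <- alg_a by (auto; apply vpos; auto).
    apply (is_derive_comp (Pf gamma) v T); [apply Pf_derive; auto; apply vpos; auto|].
    apply Hdv; auto. }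
  assert (frange : forall T, 0 < f T < 1) by (intros; apply Pf_range).
  assert (f0 : f 0 = 1 / 2).
  { unfold f, Pf, wf. rewrite v0, Rpower_one. field. }
  assert (fdec : forall x y, 0 <= x -> x <= y -> f y <= f x).
  { apply (decr_of f (fun t => gfun lambda gamma (f t))); auto.
    intros t _. apply gfun_neg; auto. }
  assert (Hloc : forall T, 0 < T -> forall g1 g2 : R -> R, (forall x, 0 <= x -> g1 x = g2 x) ->
            locally T (fun t => g1 t = g2 t)).
  { intros T HT g1 g2 Hg12. exists (mkposreal T HT). intros y Hy.
    change (Rabs (y - T) < T) in Hy. apply Rabs_def2 in Hy. apply Hg12. lra. }
  split; [exact u0|].
  split.
  { intros T HT. rewrite Huv by lra. rewrite <- alg_u by (auto; apply vpos; lra).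
    apply (is_derive_ext_loc v u); [apply Hloc; auto; intros; symmetry; apply Huv; auto|].
    apply Hdv; lra. }
  split.
  { rewrite <- (alg_u lambda gamma (u 0)) by (auto; rewrite u0; lra).
    assert (E : lambda * (Phi gamma (u 0) - u 0) = lambda * (Phi gamma (v 0) - v 0))
      by (rewrite Huv by lra; auto). rewrite E.
    apply (rderiv v u); [apply Hdv; lra|]. auto. }
  split; [rewrite Haf by lra; exact f0|].
  split.
  { intros T HT. rewrite Haf by lra. fold (gfun lambda gamma (f T)).
    apply (is_derive_ext_loc f a); [apply Hloc; auto; intros; symmetry; apply Haf; auto|].
    apply Hdf; lra. }
  split.
  { change (filterlim (fun h => (a h - a 0) / h) (at_right 0) (locally (gfun lambda gamma (a 0)))).
    assert (E : gfun lambda gamma (a 0) = gfun lambda gamma (f 0)) by (rewrite Haf by lra; auto).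
    rewrite E.
    apply (rderiv f a); [apply Hdf; lra|]. auto. }
  split.
  { intros T HT. rewrite Haf by lra. fold (gfun lambda gamma (f T)). apply gfun_neg; auto. }
  intros x y t Hx Hy Ht.
  assert (0 <= t * x) by (apply Rmult_le_pos; lra).
  assert (0 <= (1 - t) * y) by (apply Rmult_le_pos; lra).
  rewrite !Haf by lra.
  apply (convex_of f (fun t => gfun lambda gamma (f t))); auto.
  intros x1 y1 Hx1 Hxy1. apply gfun_mono; auto.
  - exact (proj1 (frange y1)).
  - apply Rle_trans with (f 0); [apply fdec; lra | lra].
Qed.
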